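(* There exist quaternary Hermitian LCD codes with parameters $[22,12,7]$, $[23,13,7]$, $[24,14,7]$ and $[25,15,7]$.
   Context: $\mathbb{F}_4=\{0,1,\omega,\omega^2\}$. A quaternary $[n,k,d]$ code is a $k$-dimensional subspace $C\subseteq\mathbb{F}_4^n$ with minimum nonzero Hamming weight $d$. The Hermitian inner product is $\langle x,y\rangle_H=\sum x_i y_i^2$ and $C^{\perp_H}$ is the corresponding dual; $C$ is Hermitian LCD if $C\cap C^{\perp_H}=\{0\}$. *)

(* Defs.v *)
From HB Require Import structures.
From mathcomp Require Import all_boot all_order all_algebra all_field.
Set Implicit Arguments. Unset Strict Implicit. Unset Printing Implicit Defensive.
Import GRing.Theory.
Local Open Scope ring_scope.

Section Codes.
Variable F : finFieldType.

Definition hwt (n : nat) (x : 'rV[F]_n) : nat := #|[set i : 'I_n | x 0 i != 0]|.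

(* Hermitian inner product <x,y>_H = sum_i x_i y_i^2 (y^2 is conjugation in F_4). *)
Definition hdot (n : nat) (x y : 'rV[F]_n) : F := \sum_(i < n) x 0 i * (y 0 i) ^+ 2.

Definition in_hdual (n : nat) (C : {vspace 'rV[F]_n}) (y : 'rV[F]_n) : Prop :=
  forall x, x \in C -> hdot x y = 0.

Definition is_nkd_code (n k d : nat) (C : {vspace 'rV[F]_n}) : Prop :=
  [/\ \dim C = k,
      (exists2 x, x \in C & (x != 0) && (hwt (n:=n) x == d))
    & forall x, x \in C -> x != 0 -> (d <= hwt (n:=n) x)%N].

Definition herm_LCD (n : nat) (C : {vspace 'rV[F]_n}) : Prop :=
  forall y, y \in C -> in_hdual C y -> y = 0.

Definition exists_herm_LCD_code (n k d : nat) : Prop :=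
  exists C : {vspace 'rV[F]_n}, @is_nkd_code n k d C /\ herm_LCD C.
End Codes.

(* Main.v *)
Require Import Defs.
From mathcomp Require Import all_boot all_order all_algebra all_field.
From mathcomp Require Import zify ring.
Set Implicit Arguments. Unset Strict Implicit. Unset Printing Implicit Defensive.
Import GRing.Theory.

Inductive F4 := O4 | I4 | W4 | V4.
Definition add4 (a b : F4) : F4 :=
  match a, b with
  | O4, x => x | x, O4 => x
  | I4, I4 => O4 | I4, W4 => V4 | I4, V4 => W4
  | W4, I4 => V4 | W4, W4 => O4 | W4, V4 => I4
  | V4, I4 => W4 | V4, W4 => I4 | V4, V4 => O4
  end.
Definition mul4 (a b : F4) : F4 :=
  match a, b with
  | O4, _ => O4 | _, O4 => O4
  | I4, x => x | x, I4 => x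
  | W4, W4 => V4 | W4, V4 => I4
  | V4, W4 => I4 | V4, V4 => W4
  end.
Definition conj4 (a : F4) : F4 :=
  match a with W4 => V4 | V4 => W4 | x => x end.
Definition nz4 (a : F4) : bool := if a is O4 then false else true.
Fixpoint vadd (a b : seq F4) : seq F4 :=
  match a, b with
  | x :: a', y :: b' => add4 x y :: vadd a' b'
  | [::], b => b
  | a, [::] => a
  end.
Definition vscale c (a : seq F4) := map (mul4 c) a.
Definition sadd c row acc :=
  match c with
  | O4 => acc
  | I4 => vadd row acc
  | W4 => vadd (vscale W4 row) acc
  | V4 => vadd (vscale V4 row) acc
  end.
Fixpoint chk (rows : seq (seq F4)) (acc : seq F4) (w : nat) : bool :=
  match rows with
  | [::] => (w == 0) || (7 <= w + count nz4 acc)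
  | row :: rows' =>
      if chk rows' acc w then
      if 6 <= w then true else
      if chk rows' (sadd I4 row acc) w.+1 then
      if chk rows' (sadd W4 row acc) w.+1 then
         chk rows' (sadd V4 row acc) w.+1 else false else false else false
  end.
Fixpoint lcacc (u : seq F4) (rows : seq (seq F4)) (acc : seq F4) : seq F4 :=
  match u, rows with
  | c :: u', row :: rows' => lcacc u' rows' (sadd c row acc)
  | _, _ => acc
  end.
Fixpoint dot4 (a b : seq F4) : F4 :=
  match a, b with
  | x :: a', y :: b' => add4 (mul4 x y) (dot4 a' b')
  | _, _ => O4
  end.

Lemma nth_vadd a b j : nth O4 (vadd a b) j = add4 (nth O4 a j) (nth O4 b j).
Proof.
elim: a b j => [|x a IH] [|y b] [|j] //=; by [case: x | case: (nth O4 a j)].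
Qed.
Lemma nth_vscale c a j : nth O4 (vscale c a) j = mul4 c (nth O4 a j).
Proof. elim: a j => [|x a IH] [|j] //=; by case: c. Qed.
Lemma nth_sadd c row acc j :
  nth O4 (sadd c row acc) j = add4 (mul4 c (nth O4 row j)) (nth O4 acc j).
Proof.
case: c => /=; rewrite ?nth_vadd ?nth_vscale //.
by case: (nth O4 row j).
Qed.
Lemma size_vadd a b : size (vadd a b) = maxn (size a) (size b).
Proof.
elim: a b => [|x a IH] [|y b] //=; by rewrite ?IH ?maxnSS ?maxn0 ?max0n.
Qed.
Lemma size_sadd c row acc r : size row = r -> size acc = r -> size (sadd c row acc) = r.
Proof.
move=> Hr Ha; case: c => //=; by rewrite size_vadd ?size_map Hr Ha maxnn.
Qed.
Definition Pgood (k r : nat) (rows : seq (seq F4)) : Prop :=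
  forall u, size u = k -> has nz4 u ->
    7 <= count nz4 u + count nz4 (lcacc u rows (nseq r O4)).

Lemma chkP rows : forall acc w u, chk rows acc w -> size u = size rows ->
  (w + count nz4 u == 0) || (7 <= w + count nz4 u + count nz4 (lcacc u rows acc)).
Proof.
elim: rows => [|row rows IH] acc w [|c u] //=.
  by move=> H _; rewrite !addn0.
move=> H [Hs].
have H1 : chk rows acc w by move: H; case: (chk rows acc w).
case: c => /=.
- by rewrite add0n; apply: IH.
all: case: (leqP 6 w) => [Hw|Hw].
all: try by (apply/orP; right; lia).
all: move: H; rewrite H1 leqNgt Hw /=.
- case: (chk rows (sadd I4 row acc) w.+1) (IH (sadd I4 row acc) w.+1 u) => // /(_ isT Hs).
  by rewrite addnA addn1.
- case: (chk rows (sadd I4 row acc) w.+1) => //.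
  case: (chk rows (sadd W4 row acc) w.+1) (IH (sadd W4 row acc) w.+1 u) => // /(_ isT Hs).
  by rewrite addnA addn1.
- case: (chk rows (sadd I4 row acc) w.+1) => //.
  case: (chk rows (sadd W4 row acc) w.+1) => //.
  move=> H2; have := IH (sadd V4 row acc) w.+1 u H2 Hs.
  by rewrite addnA addn1.
Qed.

Lemma chk_good k r rows : size rows = k -> chk rows (nseq r O4) 0 -> Pgood k r rows.
Proof.
move=> Hk H u Hu Hnz.
have := chkP H (u:=u); rewrite Hu Hk => /(_ erefl).
rewrite !add0n; case/orP => // /eqP Hc.
by move: Hnz; rewrite has_count Hc.
Qed.

Lemma lcacc_nseq m rows acc : lcacc (nseq m O4) rows acc = acc.
Proof. by elim: m rows => [|m IH] [|row rows] //=. Qed.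

Lemma lcacc_cat u m rows acc :
  lcacc (u ++ nseq m O4) rows acc = lcacc u (take (size u) rows) acc.
Proof.
elim: u rows acc => [|c u IH] [|row rows] acc //=; by rewrite lcacc_nseq.
Qed.

Lemma Pgood_take k r rows k' : k' <= k -> Pgood k r rows -> Pgood k' r (take k' rows).
Proof.
move=> Hk H u Hu Hnz.
have := H (u ++ nseq (k - k') O4).
rewrite size_cat size_nseq Hu subnKC // => /(_ erefl).
rewrite has_cat Hnz /= => /(_ isT).
by rewrite count_cat count_nseq lcacc_cat Hu mul0n addn0.
Qed.
Lemma size_lcacc (r : nat) u rows acc : all (fun row => size row == r) rows -> size acc = r ->
  size (lcacc u rows acc) = r.
Proof.
elim: u rows acc => [|c u IH] [|row rows] acc //= /andP [/eqP Hr Hall] Ha.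
by apply: IH => //; apply: size_sadd.
Qed.

Lemma nhas_nth s j : ~~ has nz4 s -> nth O4 s j = O4.
Proof. elim: s j => [|x s IH] [|j] //=; case: x => //= H; exact: IH. Qed.

Open Scope ring_scope.

Section FF.
Variable F : finFieldType.
Variable w : F.
Hypothesis h2 : 1 + 1 = 0 :> F.
Hypothesis hw : w * w = w + 1.
Hypothesis hall : forall x : F, [\/ x = 0, x = 1, x = w | x = w + 1].

Lemma addxx (x : F) : x + x = 0.
Proof. by rewrite -{1 2}[x]mulr1 -mulrDr h2 mulr0. Qed.

Lemma w_neq0 : w != 0.
Proof.
apply/eqP => H; move: hw; rewrite H mul0r add0r => /eqP; by rewrite eq_sym oner_eq0.
Qed.
Lemma w_neq1 : w != 1.
Proof. apply/eqP => H; move: hw; rewrite H mul1r h2 => /eqP; by rewrite oner_eq0. Qed.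
Lemma w1_neq0 : w + 1 != 0.
Proof.
apply/eqP => H; move: hw; rewrite H => /eqP; rewrite mulf_eq0 orbb => /eqP H0.
by move: H; rewrite H0 add0r => /eqP; rewrite oner_eq0.
Qed.

Definition phi (a : F4) : F :=
  match a with O4 => 0 | I4 => 1 | W4 => w | V4 => w + 1 end.

Lemma wV : w * (w + 1) = 1.
Proof. by rewrite mulrDr mulr1 hw addrAC addxx add0r. Qed.
Lemma VV : (w + 1) * (w + 1) = w.
Proof. by rewrite mulrDl mul1r wV addrCA h2 addr0. Qed.

Lemma phi_add a b : phi (add4 a b) = phi a + phi b.
Proof.
case: a; case: b => /=; rewrite ?add0r ?addr0 ?addxx ?h2 //.
all: try by rewrite addrC.
all: try by rewrite addrCA h2 addr0.
all: try by rewrite addrA addxx add0r.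
all: try by rewrite -addrA h2 addr0.
all: try by rewrite addrC addrA addxx add0r.
Qed.

Lemma phi_mul a b : phi (mul4 a b) = phi a * phi b.
Proof.
case: a; case: b => /=; rewrite ?mul0r ?mulr0 ?mul1r ?mulr1 //.
- by rewrite wV.
- by rewrite mulrC wV.
- by rewrite VV.
Qed.

Lemma phi_conj a : phi (conj4 a) = phi a ^+ 2.
Proof.
case: a => /=; rewrite expr2 ?mul0r ?mul1r //.
by rewrite VV.
Qed.

Lemma phi_eq0 a : (phi a == 0) = ~~ nz4 a.
Proof.
case: a => /=; rewrite ?eqxx ?oner_eq0 //.
- exact: (negPf w_neq0).
- exact: (negPf w1_neq0).
Qed.

Definition pre (x : F) : F4 :=
  if x == 0 then O4 else if x == 1 then I4 else if x == w then W4 else V4.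

Lemma phi_pre x : phi (pre x) = x.
Proof.
rewrite /pre; case: (hall x) => ->.
- by rewrite eqxx.
- by rewrite oner_eq0 eqxx.
- by rewrite (negPf w_neq0) (negPf w_neq1) eqxx.
- rewrite (negPf w1_neq0).
  have -> : (w + 1 == 1) = false.
    apply/negP => /eqP H; move/eqP: w_neq0; apply.
    by rewrite -[w](addrK 1) H subrr.
  have -> : (w + 1 == w) = false.
    apply/negP => /eqP H; move/eqP: (oner_neq0 F); apply.
    by rewrite -[1](addKr w) H addNr.
  by [].
Qed.

Lemma sqrD (x y : F) : (x + y) ^+ 2 = x ^+ 2 + y ^+ 2.
Proof. by rewrite sqrrD mulr2n addxx addr0. Qed.

Lemma sqr_sum n (f : 'I_n -> F) : (\sum_(i < n) f i) ^+ 2 = \sum_(i < n) f i ^+ 2.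
Proof.
apply: (big_morph (fun x : F => x ^+ 2) sqrD); by rewrite expr2 mulr0.
Qed.

Lemma hdot_mul n k (x : 'rV[F]_n) (u : 'rV[F]_k) (G : 'M[F]_(k, n)) :
  hdot x (u *m G) = \sum_(l < k) hdot x (row l G) * u 0 l ^+ 2.
Proof.
rewrite /hdot.
transitivity (\sum_(i < n) \sum_(l < k) x 0 i * G l i ^+ 2 * u 0 l ^+ 2).
  apply: eq_bigr => i _; rewrite mxE sqr_sum mulr_sumr.
  by apply: eq_bigr => l _; rewrite exprMn; ring.
rewrite exchange_big; apply: eq_bigr => l _; rewrite mulr_suml.
by apply: eq_bigr => i _; rewrite mxE.
Qed.

Definition mat k r (rows : seq (seq F4)) : 'M[F]_(k, r) :=
  \matrix_(i, j) phi (nth O4 (nth [::] rows i) j).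
Definition rvec n (s : seq F4) : 'rV[F]_n := \row_j phi (nth O4 s j).
Definition Gm k r rows : 'M[F]_(k, k + r) := row_mx 1%:M (mat k r rows).

Lemma lcaccE k u rows acc j : size u = k -> size rows = k ->
  phi (nth O4 (lcacc u rows acc) j) =
  phi (nth O4 acc j) + \sum_(i < k) phi (nth O4 u i) * phi (nth O4 (nth [::] rows i) j).
Proof.
move=> <-; elim: u rows acc => [|c u IH] [|row rows] acc //=.
- by rewrite big_ord0 addr0.
- move=> [Hs]; rewrite IH // big_ord_recl /= nth_sadd phi_add phi_mul -addrA addrCA.
  congr (_ + (_ + _)); apply: eq_bigr => i _; by rewrite lift0.
Qed.

Lemma rvec_mul k r uc rows : size uc = k -> size rows = k ->
  rvec k uc *m mat k r rows = rvec r (lcacc uc rows (nseq r O4)).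
Proof.
move=> Hu Hr; apply/rowP => j; rewrite !mxE (@lcaccE k uc rows (nseq r O4) j Hu Hr) nth_nseq if_same /= add0r.
by apply: eq_bigr => i _; rewrite !mxE.
Qed.

Lemma row_mx_rvec k r s1 s2 : size s1 = k ->
  row_mx (rvec k s1) (rvec r s2) = rvec (k + r) (s1 ++ s2).
Proof.
move=> Hs; apply/rowP => j; rewrite !mxE; case: splitP => j' ->; rewrite !mxE nth_cat Hs.
- by rewrite ltn_ord.
- by rewrite ltnNge leq_addr /= addKn.
Qed.

Lemma hwt_rvec n s : size s = n -> hwt (rvec n s) = count nz4 s.
Proof.
move=> Hs; rewrite /hwt.
transitivity #|[pred j : 'I_n | nz4 (nth O4 s j)]|.
  by apply: eq_card => j; rewrite !inE mxE phi_eq0 negbK.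
rewrite cardE /enum_mem size_filter -enumT.
rewrite (eq_count (a2 := preim val (fun i => nz4 (nth O4 s i)))) //.
rewrite -count_map val_enum_ord -(count_map (nth O4 s) nz4) -/(mkseq _ _) -Hs.
by rewrite mkseq_nth.
Qed.

Lemma hwt0 n : hwt (0 : 'rV[F]_n) = 0%N.
Proof.
rewrite /hwt; apply/eqP; rewrite cards_eq0; apply/eqP/setP => i.
by rewrite !inE mxE eqxx.
Qed.

Lemma rvec_surj k (u : 'rV[F]_k) : exists2 uc, size uc = k & u = rvec k uc.
Proof.
exists [seq pre (u 0 i) | i <- enum 'I_k]; first by rewrite size_map size_enum_ord.
by apply/rowP => j; rewrite mxE (nth_map j) ?size_enum_ord // nth_ord_enum phi_pre.
Qed.


Lemma dot4E n a b : size a = n -> size b = n ->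
  phi (dot4 a b) = \sum_(i < n) phi (nth O4 a i) * phi (nth O4 b i).
Proof.
move=> <-; elim: a b => [|x a IH] [|y b] //=.
- by rewrite big_ord0.
- move=> [Hb]; rewrite big_ord_recl phi_add phi_mul IH //.
Qed.

Definition gramc (rows : seq (seq F4)) (j l : nat) : F4 :=
  add4 (if j == l then I4 else O4) (dot4 (nth [::] rows j) (map conj4 (nth [::] rows l))).

Definition eq4 (a b : F4) : bool :=
  match a, b with
  | O4, O4 | I4, I4 | W4, W4 | V4, V4 => true | _, _ => false end.
Lemma eq4P a b : eq4 a b -> a = b.
Proof. by case: a; case: b. Qed.

Definition ncheck (k : nat) (rows Nc : seq (seq F4)) : bool :=
  (size Nc == k) && all (fun row => size row == k) Nc &&
  all (fun j => all (fun l =>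
      eq4 (dot4 (nth [::] Nc j) (map (fun m => gramc rows m l) (iota 0 k)))
        (if j == l then I4 else O4)) (iota 0 k)) (iota 0 k).

Lemma size_nth_rows (r : nat) (rows : seq (seq F4)) (j : nat) :
  all (fun row => size row == r) rows -> (j < size rows)%N -> size (nth [::] rows j) = r.
Proof. by move=> Hr Hj; apply/eqP; move/(all_nthP [::]): Hr; apply. Qed.

Lemma gramE (k r : nat) rows (j l : 'I_k) : size rows = k -> all (fun row => size row == r) rows ->
  hdot (row j (Gm k r rows)) (row l (Gm k r rows)) = phi (gramc rows j l).
Proof.
move=> Hk Hr; rewrite /hdot big_split_ord /= phi_add; congr (_ + _).
- rewrite (bigD1 j) //= big1 ?addr0 => [|i Hij].
    rewrite ![row _ _ _ _]mxE !row_mxEl !mxE eqxx mul1r.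
    case: (eqVneq j l) => [->|Hjl]; first by rewrite eqxx /= expr2 mulr1.
    have -> : (nat_of_ord j == nat_of_ord l) = false by apply/negP => /eqP/val_inj/eqP; apply/negP.
    by rewrite /= expr2 mulr0.
  by rewrite ![row _ _ _ _]mxE !row_mxEl !mxE eq_sym (negPf Hij) mul0r.
- have Hj : (j < size rows)%N by rewrite Hk.
  have Hl : (l < size rows)%N by rewrite Hk.
  rewrite (@dot4E r) ?size_map ?(size_nth_rows Hr) //.
  apply: eq_bigr => i _; rewrite ![row _ _ _ _]mxE !row_mxEr !mxE (nth_map O4) ?(size_nth_rows Hr) //.
  by rewrite phi_conj.
Qed.

Lemma hwt_cw (k r : nat) rows uc : size rows = k -> all (fun row => size row == r) rows ->
  size uc = k ->
  hwt (rvec k uc *m Gm k r rows) = (count nz4 uc + count nz4 (lcacc uc rows (nseq r O4)))%N.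
Proof.
move=> Hk Hr Hu.
rewrite /Gm mul_mx_row mulmx1 rvec_mul // row_mx_rvec // hwt_rvec ?count_cat //.
by rewrite size_cat Hu (size_lcacc _ Hr) ?size_nseq.
Qed.

Lemma main_gen (k r : nat) rows Nc uc :
  size rows = k -> all (fun row => size row == r) rows -> Pgood k r rows ->
  ncheck k rows Nc -> size uc = k ->
  (count nz4 uc + count nz4 (lcacc uc rows (nseq r O4)))%N = 7%N ->
  exists_herm_LCD_code F (k + r) k 7.
Proof.
move=> Hk Hr Hgood HN Huc H7.
pose G := Gm k r rows.
pose f := linfun (mulmxr G : 'rV[F]_k -> 'rV[F]_(k + r)).
have memC x : reflect (exists u, x = u *m G) (x \in limg f).
  apply: (iffP memv_imgP) => [[u _ ->]|[u ->]]; exists u; rewrite ?memvf ?lfunE //.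
exists (limg f); split; first split.
- rewrite limg_dim_eq ?dimvf /dim /= ?mul1n //.
  suff /eqP -> : lker f == 0%VS by rewrite capv0.
  apply/lker0P => u v; rewrite !lfunE /= /G /Gm !mul_mx_row !mulmx1.
  by case/eq_row_mx.
- exists (rvec k uc *m G); first by apply/memC; exists (rvec k uc).
  have Hw : hwt (rvec k uc *m G) = 7%N by rewrite hwt_cw.
  rewrite Hw eqxx andbT; apply/negP => /eqP H0.
  by move: Hw; rewrite H0 hwt0.
- move=> x /memC [u ->] Hx0.
  have [uc' Hs Hu] := rvec_surj u.
  rewrite Hu hwt_cw //; apply: Hgood => //.
  case: (boolP (has nz4 uc')) => // Hn; move: Hx0.
  suff -> : u = 0 by rewrite mul0mx eqxx.
  by apply/rowP => j; rewrite Hu !mxE nhas_nth.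
- move=> y /memC [u ->] Hd.
  have H0 (j : 'I_k) : \sum_(l < k) phi (gramc rows j l) * u 0 l ^+ 2 = 0.
    rewrite -[RHS](Hd (row j G)); last by apply/memC; exists (delta_mx 0 j); rewrite rowE.
    by rewrite hdot_mul; apply: eq_bigr => l _; rewrite gramE.
  move: HN => /andP [/andP [/eqP HNk HNr] HN].
  have HNM (j l : 'I_k) :
      \sum_(m < k) phi (nth O4 (nth [::] Nc j) m) * phi (gramc rows m l) = (j == l)%:R.
    have := allP HN j; rewrite mem_iota add0n ltn_ord => /(_ isT) /allP /(_ l).
    rewrite mem_iota add0n ltn_ord => /(_ isT) /eq4P Hjl.
    transitivity (phi (dot4 (nth [::] Nc j) [seq gramc rows m l | m <- iota 0 k])).
      rewrite (@dot4E k) ?size_map ?size_iota ?(size_nth_rows HNr) ?HNk //.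
      by apply: eq_bigr => m _; rewrite (nth_map 0%N) ?size_iota // nth_iota.
    rewrite Hjl -(inj_eq val_inj); by case: (nat_of_ord j == nat_of_ord l).
  have Hu2 (l0 : 'I_k) : u 0 l0 ^+ 2 = 0.
    transitivity (\sum_(l < k) (l0 == l)%:R * u 0 l ^+ 2).
      rewrite (bigD1 l0) //= eqxx mul1r big1 ?addr0 // => l Hl.
      by rewrite eq_sym (negPf Hl) mul0r.
    transitivity (\sum_(m < k) phi (nth O4 (nth [::] Nc l0) m) *
                    \sum_(l < k) phi (gramc rows m l) * u 0 l ^+ 2).
      under eq_bigr do rewrite -HNM mulr_suml.
      rewrite exchange_big; apply: eq_bigr => m _; rewrite mulr_sumr.
      by apply: eq_bigr => l _; rewrite mulrA.
    by rewrite big1 // => m _; rewrite H0 mulr0.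
  suff -> : u = 0 by rewrite mul0mx.
  apply/rowP => l; rewrite mxE; apply/eqP.
  by have := Hu2 l; move/eqP; rewrite expf_eq0.
Qed.

End FF.
Definition rowsA := [:: [:: W4; W4; I4; V4; W4; I4; W4; V4; V4; O4];
  [:: V4; W4; W4; I4; V4; O4; I4; W4; V4; V4];
  [:: I4; V4; W4; W4; I4; I4; O4; I4; W4; V4];
  [:: W4; I4; V4; W4; W4; I4; I4; O4; I4; W4];
  [:: V4; W4; I4; V4; W4; V4; I4; I4; O4; I4];
  [:: W4; O4; W4; W4; O4; W4; O4; O4; I4; I4];
  [:: O4; W4; O4; W4; W4; W4; W4; O4; O4; I4];
  [:: V4; O4; W4; O4; W4; W4; W4; W4; O4; O4];
  [:: V4; V4; O4; W4; O4; O4; W4; W4; W4; O4];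
  [:: O4; V4; V4; O4; W4; O4; O4; W4; W4; W4];
  [:: O4; O4; V4; W4; V4; W4; O4; I4; W4; V4];
  [:: V4; I4; O4; O4; V4; V4; I4; W4; O4; I4];
  [:: I4; O4; O4; V4; W4; I4; W4; O4; I4; W4];
  [:: O4; V4; W4; V4; O4; O4; I4; W4; V4; I4];
  [:: V4; W4; V4; O4; O4; I4; W4; V4; I4; O4]].
Definition N15 := [:: [:: O4; W4; W4; W4; W4; I4; I4; I4; V4; V4; V4; W4; I4; W4; I4];
  [:: V4; O4; W4; W4; W4; I4; I4; I4; I4; V4; W4; I4; V4; I4; V4];
  [:: V4; V4; O4; W4; W4; I4; I4; I4; I4; I4; I4; V4; W4; V4; W4];
  [:: V4; V4; V4; O4; W4; W4; I4; I4; I4; I4; V4; W4; I4; W4; I4];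
  [:: V4; V4; V4; V4; O4; W4; W4; I4; I4; I4; W4; I4; V4; I4; V4];
  [:: I4; I4; I4; V4; V4; O4; W4; W4; W4; W4; V4; I4; W4; V4; W4];
  [:: I4; I4; I4; I4; V4; V4; O4; W4; W4; W4; V4; W4; V4; W4; W4];
  [:: I4; I4; I4; I4; I4; V4; V4; O4; W4; W4; W4; V4; V4; W4; V4];
  [:: W4; I4; I4; I4; I4; V4; V4; V4; O4; W4; W4; V4; W4; V4; I4];
  [:: W4; W4; I4; I4; I4; V4; V4; V4; V4; O4; V4; W4; W4; I4; I4];
  [:: W4; V4; I4; W4; V4; W4; W4; V4; V4; W4; I4; V4; O4; O4; W4];
  [:: V4; I4; W4; V4; I4; I4; V4; W4; W4; V4; W4; I4; O4; I4; O4];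
  [:: I4; W4; V4; I4; W4; V4; W4; W4; V4; V4; O4; O4; I4; W4; I4];
  [:: V4; I4; W4; V4; I4; W4; V4; V4; W4; I4; O4; I4; V4; I4; O4];
  [:: I4; W4; V4; I4; W4; V4; V4; W4; I4; I4; V4; O4; I4; O4; I4]].
Definition N14 := [:: [:: I4; O4; I4; V4; O4; W4; W4; V4; W4; W4; O4; W4; O4; W4];
  [:: O4; I4; O4; I4; V4; V4; V4; O4; W4; O4; O4; I4; O4; I4];
  [:: I4; O4; I4; O4; I4; O4; O4; W4; V4; V4; O4; V4; O4; V4];
  [:: W4; I4; O4; I4; O4; I4; W4; V4; O4; O4; O4; W4; O4; W4];
  [:: O4; W4; I4; O4; I4; O4; O4; O4; W4; W4; O4; I4; O4; I4];
  [:: V4; W4; O4; I4; O4; I4; V4; I4; O4; O4; W4; I4; O4; V4];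
  [:: V4; W4; O4; V4; O4; W4; I4; I4; O4; O4; W4; W4; I4; W4];
  [:: W4; O4; V4; W4; O4; I4; I4; I4; I4; I4; O4; V4; O4; W4];
  [:: V4; V4; W4; O4; V4; O4; O4; I4; I4; V4; I4; V4; V4; V4];
  [:: V4; O4; W4; O4; V4; O4; O4; I4; W4; I4; O4; W4; V4; I4];
  [:: O4; O4; O4; O4; O4; V4; V4; O4; I4; O4; O4; V4; W4; O4];
  [:: V4; I4; W4; V4; I4; I4; V4; W4; W4; V4; W4; I4; O4; I4];
  [:: O4; O4; O4; O4; O4; O4; I4; O4; W4; W4; V4; O4; O4; W4];
  [:: V4; I4; W4; V4; I4; W4; V4; V4; W4; I4; O4; I4; V4; I4]].
Definition N13 := [:: [:: O4; W4; W4; W4; W4; I4; V4; W4; I4; O4; O4; O4; I4];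
  [:: V4; O4; W4; W4; W4; I4; O4; V4; O4; I4; O4; O4; V4];
  [:: V4; V4; O4; W4; W4; I4; W4; O4; W4; O4; O4; O4; W4];
  [:: V4; V4; V4; O4; W4; W4; V4; W4; V4; W4; O4; O4; I4];
  [:: V4; V4; V4; V4; O4; W4; V4; V4; O4; V4; O4; O4; V4];
  [:: I4; I4; I4; V4; V4; O4; I4; V4; I4; V4; W4; W4; W4];
  [:: W4; O4; V4; W4; W4; I4; O4; O4; V4; W4; W4; O4; O4];
  [:: V4; W4; O4; V4; W4; W4; O4; O4; W4; V4; O4; I4; I4];
  [:: I4; O4; V4; W4; O4; I4; W4; V4; O4; O4; I4; O4; I4];
  [:: O4; I4; O4; V4; W4; W4; V4; W4; O4; O4; O4; V4; O4];
  [:: O4; O4; O4; O4; O4; V4; V4; O4; I4; O4; O4; V4; W4];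
  [:: O4; O4; O4; O4; O4; V4; O4; I4; O4; W4; W4; O4; V4];
  [:: I4; W4; V4; I4; W4; V4; O4; I4; I4; O4; V4; W4; I4]].
Definition N12 := [:: [:: I4; O4; I4; V4; O4; W4; V4; V4; O4; O4; V4; W4];
  [:: O4; I4; O4; I4; V4; V4; O4; O4; V4; I4; W4; I4];
  [:: I4; O4; I4; O4; I4; O4; W4; W4; O4; O4; I4; V4];
  [:: W4; I4; O4; I4; O4; I4; V4; V4; W4; W4; V4; W4];
  [:: O4; W4; I4; O4; I4; O4; V4; O4; V4; V4; W4; I4];
  [:: V4; W4; O4; I4; O4; I4; I4; I4; V4; V4; V4; I4];
  [:: W4; O4; V4; W4; W4; I4; O4; O4; V4; W4; W4; O4];
  [:: W4; O4; V4; W4; O4; I4; O4; I4; V4; V4; V4; V4];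
  [:: O4; W4; O4; V4; W4; W4; W4; W4; I4; O4; W4; W4];
  [:: O4; I4; O4; V4; W4; W4; V4; W4; O4; O4; O4; V4];
  [:: W4; V4; I4; W4; V4; W4; V4; W4; V4; O4; I4; O4];
  [:: V4; I4; W4; V4; I4; I4; O4; W4; V4; W4; O4; I4]].

Definition u7 (k : nat) : seq F4 := mkseq (fun i => if i == 5 then I4 else O4) k.

Lemma good15 : Pgood 15 10 rowsA.
Proof. by apply: chk_good; [by [] | vm_compute]. Qed.

Theorem lemma6p1 (F : finFieldType) (hF : #|F| = 4%N) :
  [/\ exists_herm_LCD_code F 22 12 7,
      exists_herm_LCD_code F 23 13 7,
      exists_herm_LCD_code F 24 14 7
    & exists_herm_LCD_code F 25 15 7].
Proof.
have h2 : 1 + 1 = 0 :> F.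
  by rewrite -mulr2n; apply: pcharf0 (card_finPcharP (p:=2) (n:=2) hF isT).
have addxx' (x : F) : x + x = 0 by rewrite -{1 2}[x]mulr1 -mulrDr h2 mulr0.
have eq_of_add0 (x y : F) : x + y = 0 -> x = y.
  by move=> H; rewrite -[x]addr0 -(addxx' y) addrA H add0r.
have [w Hw0 Hw1] : exists2 w : F, w != 0 & w != 1.
  case: (pickP (fun x : F => (x != 0) && (x != 1))) => [x /andP [? ?] | Hn].
    by exists x.
  have Hsub : [set: F] \subset [set 0; 1].
    apply/subsetP => x _; rewrite !inE; move: (Hn x) => /=.
    by case: (x == 0); case: (x == 1).
  by move: (subset_leq_card Hsub); rewrite cardsT cards2 hF; case: (_ != _).
have w4 : w ^+ 4 = w by rewrite -hF expf_card.
have w3 : w ^+ 3 = 1.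
  apply/eqP; rewrite -subr_eq0.
  have : w * (w ^+ 3 - 1) = 0 by rewrite mulrBr mulr1 -exprS w4 subrr.
  by move/eqP; rewrite mulf_eq0 (negPf Hw0).
have hw : w * w = w + 1.
  have e : (w - 1) * (w * w + w + 1) = w ^+ 3 - 1 by ring.
  move: e; rewrite w3 subrr => /eqP; rewrite mulf_eq0 subr_eq0 (negPf Hw1) /= => /eqP H.
  by apply: eq_of_add0; rewrite addrA.
have hall (x : F) : [\/ x = 0, x = 1, x = w | x = w + 1].
  have x4 : x ^+ 4 = x by rewrite -hF expf_card.
  have e : x * (x + 1) * (x + w) * (x + (w + 1)) =
     x ^+ 4 + x + (1 + 1) * (x ^+ 3 + x ^+ 2 + x * (x + 1) * (w * x + w))
       + x * (x + 1) * (w * w - w - 1) by ring.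
  have e2 : w * w - w - 1 = 0 by rewrite hw; ring.
  move: e; rewrite e2 h2 x4 addxx' mul0r mulr0 !addr0.
  move/eqP; rewrite !mulf_eq0 => /orP [/orP [/orP [/eqP H|/eqP H]|/eqP H]|/eqP H].
  - by constructor 1.
  - by constructor 2; apply: eq_of_add0.
  - by constructor 3; apply: eq_of_add0.
  - by constructor 4; apply: eq_of_add0.
split.
- apply: (@main_gen F w h2 hw hall 12 10 (take 12 rowsA) N12 (u7 12)).
  + by vm_compute.
  + by vm_compute.
  + exact: (Pgood_take (isT : (12 <= 15)%N) good15).
  + by vm_compute.
  + by vm_compute.
  + by vm_compute.
- apply: (@main_gen F w h2 hw hall 13 10 (take 13 rowsA) N13 (u7 13)).
  + by vm_compute.
  + by vm_compute.
  + exact: (Pgood_take (isT : (13 <= 15)%N) good15).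
  + by vm_compute.
  + by vm_compute.
  + by vm_compute.
- apply: (@main_gen F w h2 hw hall 14 10 (take 14 rowsA) N14 (u7 14)).
  + by vm_compute.
  + by vm_compute.
  + exact: (Pgood_take (isT : (14 <= 15)%N) good15).
  + by vm_compute.
  + by vm_compute.
  + by vm_compute.
- apply: (@main_gen F w h2 hw hall 15 10 rowsA N15 (u7 15)).
  + by vm_compute.
  + by vm_compute.
  + exact: good15.
  + by vm_compute.
  + by vm_compute.
  + by vm_compute.
Qed.
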